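(* Let $2\leq\alpha,\beta\leq\omega$. Then there is a recursive set $\Theta$ of first-order sentences in the signature of posets (one binary relation $\leq$) such that for every countable poset $P$, $P\models\Theta$ if and only if $P$ is $(\alpha,\beta)$-representable.
   Context: The result is asserted to hold in ZF, without any form of the Axiom of Choice. A poset $P$ is $(\alpha,\beta)$-representable if there is a set $X$ and an order embedding $h:P\to\wp(X)$ ($\wp(X)$ ordered by inclusion) such that whenever $S\subseteq P$ with $|S|<\alpha$ and $\bigwedge S$ exists in $P$ then $h(\bigwedge S)=\bigcap h[S]$ (with $\bigcap\emptyset=X$), and whenever $T\subseteq P$ with $|T|<\beta$ and $\bigvee T$ exists in $P$ then $h(\bigvee T)=\bigcup h[T]$. *)

(* Defs.v *)
From Stdlib Require Import List Arith.
Import ListNotations.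

(* ---------- First-order formulas in the signature of posets {<=}, with equality.
   Variables are de Bruijn indices. *)
Inductive formula : Type :=
| FEq  : nat -> nat -> formula
| FLe  : nat -> nat -> formula
| FBot : formula
| FImp : formula -> formula -> formula
| FAnd : formula -> formula -> formula
| FOr  : formula -> formula -> formula
| FAll : formula -> formula
| FEx  : formula -> formula.

Fixpoint closed_at (k : nat) (f : formula) : Prop :=
  match f with
  | FEq i j | FLe i j => i < k /\ j < k
  | FBot => True
  | FImp p q | FAnd p q | FOr p q => closed_at k p /\ closed_at k q
  | FAll p | FEx p => closed_at (S k) p
  end.

Definition sentence (f : formula) : Prop := closed_at 0 f.

Fixpoint sat {T : Type} (le : T -> T -> Prop) (env : list T) (f : formula) : Prop :=
  match f with
  | FEq i j => match nth_error env i, nth_error env j with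
               | Some a, Some b => a = b | _, _ => False end
  | FLe i j => match nth_error env i, nth_error env j with
               | Some a, Some b => le a b | _, _ => False end
  | FBot => False
  | FImp p q => sat le env p -> sat le env q
  | FAnd p q => sat le env p /\ sat le env q
  | FOr p q => sat le env p \/ sat le env q
  | FAll p => forall x : T, sat le (x :: env) p
  | FEx p => exists x : T, sat le (x :: env) p
  end.

Definition models {T : Type} (le : T -> T -> Prop) (Theta : formula -> Prop) : Prop :=
  forall f, Theta f -> sat le [] f.

Definition cpair (a b : nat) : nat := (a + b) * (a + b + 1) / 2 + b.

Fixpoint code (f : formula) : nat :=
  match f with
  | FEq i j => cpair 0 (cpair i j)
  | FLe i j => cpair 1 (cpair i j)
  | FBot => cpair 2 0
  | FImp p q => cpair 3 (cpair (code p) (code q))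
  | FAnd p q => cpair 4 (cpair (code p) (code q))
  | FOr p q => cpair 5 (cpair (code p) (code q))
  | FAll p => cpair 6 (code p)
  | FEx p => cpair 7 (code p)
  end.

Inductive recf : Type :=
| RZero : recf
| RSucc : recf
| RProj : nat -> recf
| RComp : recf -> list recf -> recf
| RPrim : recf -> recf -> recf
| RMu   : recf -> recf.

Inductive eval : recf -> list nat -> nat -> Prop :=
| ev_zero : forall v, eval RZero v 0
| ev_succ : forall v, eval RSucc v (S (hd 0 v))
| ev_proj : forall i v, i < length v -> eval (RProj i) v (nth i v 0)
| ev_comp : forall f gs v ys z,
    Forall2 (fun g y => eval g v y) gs ys -> eval f ys z -> eval (RComp f gs) v z
| ev_prim0 : forall f g v y, eval f v y -> eval (RPrim f g) (0 :: v) y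
| ev_primS : forall f g n v r y,
    eval (RPrim f g) (n :: v) r -> eval g (n :: r :: v) y ->
    eval (RPrim f g) (S n :: v) y
| ev_mu : forall f v n,
    eval f (n :: v) 0 ->
    (forall m, m < n -> exists k, eval f (m :: v) (S k)) ->
    eval (RMu f) v n.

Definition recursive_nat_set (A : nat -> Prop) : Prop :=
  exists e : recf, forall n, (A n -> eval e [n] 1) /\ (~ A n -> eval e [n] 0).

Definition recursive_formula_set (Theta : formula -> Prop) : Prop :=
  recursive_nat_set (fun n => exists f, Theta f /\ code f = n).

Inductive cardp : Type := Fin (n : nat) | Omega.

Definition ge2 (a : cardp) : Prop :=
  match a with Fin n => 2 <= n | Omega => True end.

Definition card_lt {T : Type} (S : T -> Prop) (a : cardp) : Prop :=
  exists l : list T, NoDup l /\ (forall x, S x <-> In x l) /\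
    match a with Fin n => length l < n | Omega => True end.

Definition is_poset {T : Type} (le : T -> T -> Prop) : Prop :=
  (forall x, le x x) /\
  (forall x y, le x y -> le y x -> x = y) /\
  (forall x y z, le x y -> le y z -> le x z).

Definition countable (T : Type) : Prop :=
  exists f : T -> nat, forall x y, f x = f y -> x = y.

Definition is_glb {T : Type} (le : T -> T -> Prop) (S : T -> Prop) (m : T) : Prop :=
  (forall s, S s -> le m s) /\ (forall y, (forall s, S s -> le y s) -> le y m).

Definition is_lub {T : Type} (le : T -> T -> Prop) (S : T -> Prop) (m : T) : Prop :=
  (forall s, S s -> le s m) /\ (forall y, (forall s, S s -> le s y) -> le m y).

(* Subsets of X are predicates X -> Prop; equality of sets is extensional. *)
Definition representable (a b : cardp) {T : Type} (le : T -> T -> Prop) : Prop :=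
  exists (X : Type) (h : T -> X -> Prop),
    (forall p q, le p q <-> (forall x, h p x -> h q x)) /\
    (forall (S : T -> Prop) m, card_lt S a -> is_glb le S m ->
       forall x, h m x <-> (forall s, S s -> h s x)) /\
    (forall (S : T -> Prop) m, card_lt S b -> is_lub le S m ->
       forall x, h m x <-> (exists s, S s /\ h s x)).

(* Main.v *)
Require Import Defs.
From Stdlib Require Import List Arith Lia Bool Classical ClassicalEpsilon Permutation FinFun.
Import ListNotations.

Record PR (k : nat) := mkPR {
  pf : list nat -> nat;
  pp : recf;
  pok : forall v, k <= length v -> eval pp v (pf v) }.
Arguments pf {k} _ _.
Arguments pp {k} _.
Arguments pok {k} _ _ _.

Notation "v # i" := (nth i v 0) (at level 1, no associativity).

Definition Z k : PR k := mkPR k (fun _ => 0) RZero (fun v _ => ev_zero v).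
Definition Sc : PR 1 := mkPR 1 (fun v => S (hd 0 v)) RSucc (fun v _ => ev_succ v).

Lemma Pj_ok i k (H : i < k) : forall v, k <= length v -> eval (RProj i) v (nth i v 0).
Proof. intros v Hv. apply ev_proj. lia. Qed.
Definition Pj i k (H : i < k) : PR k := mkPR k (fun v => nth i v 0) (RProj i) (Pj_ok i k H).

Definition Pjd (i k : nat) : PR k :=
  match lt_dec i k with left H => Pj i k H | right _ => Z k end.
Lemma pf_Pjd i k v : i < k -> pf (Pjd i k) v = v # i.
Proof. intros H. unfold Pjd. destruct (lt_dec i k); [reflexivity|lia]. Qed.

Definition lift {m} k (f : PR m) (H : m <= k) : PR k :=
  mkPR k (pf f) (pp f) (fun v Hv => pok f v (Nat.le_trans _ _ _ H Hv)).

Lemma comp_ok {k m} (f : PR m) (gs : list (PR k)) (H : length gs = m) :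
  forall v, k <= length v ->
  eval (RComp (pp f) (map pp gs)) v (pf f (map (fun g => pf g v) gs)).
Proof.
  intros v Hv. apply ev_comp with (ys := map (fun g => pf g v) gs).
  - clear H. induction gs as [|g gs IH]; simpl; constructor; auto. apply pok; auto.
  - apply pok. rewrite length_map. lia.
Qed.
Definition pcomp {k m} (f : PR m) (gs : list (PR k)) (H : length gs = m) : PR k :=
  mkPR k (fun v => pf f (map (fun g => pf g v) gs)) (RComp (pp f) (map pp gs)) (comp_ok f gs H).

Definition prim_fn {k} (f : PR k) (g : PR (S (S k))) (v : list nat) : nat :=
  match v with [] => 0 | n :: w => nat_rect (fun _ => nat) (pf f w) (fun i r => pf g (i :: r :: w)) n end.
Lemma prim_ok {k} (f : PR k) (g : PR (S (S k))) :
  forall v, S k <= length v -> eval (RPrim (pp f) (pp g)) v (prim_fn f g v).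
Proof.
  intros [|n w] Hv; simpl in Hv; [lia|]. simpl.
  induction n as [|n IH]; simpl.
  - apply ev_prim0. apply pok. lia.
  - eapply ev_primS. apply IH. apply pok. simpl. lia.
Qed.
Definition pprim {k} (f : PR k) (g : PR (S (S k))) : PR (S k) :=
  mkPR (S k) (prim_fn f g) (RPrim (pp f) (pp g)) (prim_ok f g).

Definition C1 {k} (f : PR 1) (g : PR k) : PR k := pcomp f [g] eq_refl.
Definition C2 {k} (f : PR 2) (g1 g2 : PR k) : PR k := pcomp f [g1; g2] eq_refl.
Definition C3 {k} (f : PR 3) (g1 g2 g3 : PR k) : PR k := pcomp f [g1; g2; g3] eq_refl.
Definition C4 {k} (f : PR 4) (g1 g2 g3 g4 : PR k) : PR k := pcomp f [g1; g2; g3; g4] eq_refl.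

Lemma pf_C1 {k} f (g : PR k) v : pf (C1 f g) v = pf f [pf g v].
Proof. reflexivity. Qed.
Lemma pf_C2 {k} f (g1 g2 : PR k) v : pf (C2 f g1 g2) v = pf f [pf g1 v; pf g2 v].
Proof. reflexivity. Qed.
Lemma pf_C3 {k} f (g1 g2 g3 : PR k) v : pf (C3 f g1 g2 g3) v = pf f [pf g1 v; pf g2 v; pf g3 v].
Proof. reflexivity. Qed.
Lemma pf_C4 {k} f (g1 g2 g3 g4 : PR k) v : pf (C4 f g1 g2 g3 g4) v = pf f [pf g1 v; pf g2 v; pf g3 v; pf g4 v].
Proof. reflexivity. Qed.

Lemma pf_pprim_0 {k} (f : PR k) g w : pf (pprim f g) (0 :: w) = pf f w.
Proof. reflexivity. Qed.
Lemma pf_pprim_S {k} (f : PR k) g n w : pf (pprim f g) (S n :: w) = pf g (n :: pf (pprim f g) (n :: w) :: w).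
Proof. reflexivity. Qed.
Lemma pf_Z k v : pf (Z k) v = 0. Proof. reflexivity. Qed.
Lemma pf_Sc v : pf Sc v = S (hd 0 v). Proof. reflexivity. Qed.

Definition Scc {k} (g : PR k) : PR k := pcomp Sc [g] eq_refl.
Lemma pf_Scc {k} (g : PR k) v : pf (Scc g) v = S (pf g v).
Proof. reflexivity. Qed.

Fixpoint cst (c k : nat) : PR k := match c with 0 => Z k | S c => Scc (cst c k) end.
Lemma pf_cst c k v : pf (cst c k) v = c.
Proof. induction c; simpl; auto. Qed.
Global Opaque pcomp pprim Pjd Z Sc cst Scc.

Global Hint Rewrite @pf_C1 @pf_C2 @pf_C3 @pf_C4 @pf_Scc pf_cst pf_Z @pf_pprim_0 @pf_pprim_S : pfdb.
Ltac pfs := repeat (progress (autorewrite with pfdb; try (rewrite pf_Pjd by (simpl; lia)); simpl)).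

Definition padd : PR 2 := pprim (Pjd 0 1) (Scc (Pjd 1 3)).
Lemma pf_padd v : pf padd v = v#0 + v#1.
Proof.
  destruct v as [|x w]; [reflexivity|]. simpl. unfold padd.
  induction x; pfs; auto.
Qed.
Global Opaque padd.
Global Hint Rewrite pf_padd : pfdb.

Definition pmul : PR 2 := pprim (Z 1) (C2 padd (Pjd 1 3) (Pjd 2 3)).
Lemma pf_pmul v : pf pmul v = v#0 * v#1.
Proof.
  destruct v as [|x w]; [reflexivity|]. simpl. unfold pmul.
  induction x; pfs; auto. rewrite IHx. lia.
Qed.
Global Opaque pmul. Global Hint Rewrite pf_pmul : pfdb.

Definition ppred : PR 1 := pprim (Z 0) (Pjd 0 2).
Lemma pf_ppred v : pf ppred v = pred (v#0).
Proof. destruct v as [|x w]; [reflexivity|]. unfold ppred. destruct x; pfs; auto. Qed.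
Global Opaque ppred. Global Hint Rewrite pf_ppred : pfdb.

Definition psub' : PR 2 := pprim (Pjd 0 1) (C1 ppred (Pjd 1 3)).
Definition psub : PR 2 := C2 psub' (Pjd 1 2) (Pjd 0 2).
Lemma pf_psub v : pf psub v = v#0 - v#1.
Proof.
  unfold psub. pfs. generalize (v#0) (v#1). intros x y. unfold psub'.
  induction y; pfs. lia. rewrite IHy. lia.
Qed.
Global Opaque psub. Global Hint Rewrite pf_psub : pfdb.

Definition pif : PR 3 := pprim (Pjd 1 2) (Pjd 2 4).
Lemma pf_pif v : pf pif v = match v#0 with 0 => v#2 | S _ => v#1 end.
Proof.
  destruct v as [|b w]; [reflexivity|]. unfold pif.
  destruct b; pfs; auto.
Qed.
Global Opaque pif. Global Hint Rewrite pf_pif : pfdb.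

Definition pite {k} (b x y : PR k) : PR k := C3 pif b x y.
Lemma pf_pite {k} (b x y : PR k) v (c : bool) :
  pf b v = Nat.b2n c -> pf (pite b x y) v = if c then pf x v else pf y v.
Proof. intros H. unfold pite. pfs. rewrite H. destruct c; reflexivity. Qed.

Definition pand {k} (x y : PR k) : PR k := C2 pmul x y.
Lemma pf_pand {k} (x y : PR k) v b c :
  pf x v = Nat.b2n b -> pf y v = Nat.b2n c -> pf (pand x y) v = Nat.b2n (b && c).
Proof. intros. unfold pand. pfs. rewrite H, H0. destruct b, c; reflexivity. Qed.
Definition pnot {k} (x : PR k) : PR k := C2 psub (cst 1 k) x.
Lemma pf_pnot {k} (x : PR k) v b :
  pf x v = Nat.b2n b -> pf (pnot x) v = Nat.b2n (negb b).
Proof. intros. unfold pnot. pfs. rewrite H. destruct b; reflexivity. Qed.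
Definition por {k} (x y : PR k) : PR k := pite x (cst 1 k) y.
Lemma pf_por {k} (x y : PR k) v b c :
  pf x v = Nat.b2n b -> pf y v = Nat.b2n c -> pf (por x y) v = Nat.b2n (b || c).
Proof. intros. unfold por. rewrite (pf_pite _ _ _ _ b) by auto. pfs. destruct b; simpl; auto. Qed.

Definition peq {k} (x y : PR k) : PR k :=
  pite (C2 padd (C2 psub x y) (C2 psub y x)) (cst 0 k) (cst 1 k).
Lemma pf_peq {k} (x y : PR k) v : pf (peq x y) v = Nat.b2n (Nat.eqb (pf x v) (pf y v)).
Proof.
  unfold peq, pite. pfs.
  destruct (Nat.eqb_spec (pf x v) (pf y v)).
  - rewrite e, Nat.sub_diag. reflexivity.
  - destruct (pf x v - pf y v + (pf y v - pf x v)) eqn:E; [lia|reflexivity].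
Qed.
Definition plt {k} (x y : PR k) : PR k := pite (C2 psub y x) (cst 1 k) (cst 0 k).
Lemma pf_plt {k} (x y : PR k) v : pf (plt x y) v = Nat.b2n (Nat.ltb (pf x v) (pf y v)).
Proof.
  unfold plt, pite. pfs.
  destruct (Nat.ltb_spec (pf x v) (pf y v)).
  - destruct (pf y v - pf x v) eqn:E; [lia|reflexivity].
  - replace (pf y v - pf x v) with 0 by lia. reflexivity.
Qed.

Fixpoint tri n := match n with 0 => 0 | S n => tri n + S n end.
Lemma tri_spec n : n * (n + 1) / 2 = tri n.
Proof.
  assert (H : n * (n + 1) = tri n * 2). { induction n; simpl; lia. }
  rewrite H. apply Nat.div_mul. lia.
Qed.
Lemma cpair_tri a b : cpair a b = tri (a + b) + b.
Proof. unfold cpair. rewrite tri_spec. reflexivity. Qed.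

Definition ptri : PR 1 := pprim (Z 0) (C2 padd (Pjd 1 2) (Scc (Pjd 0 2))).
Lemma pf_ptri v : pf ptri v = tri (v#0).
Proof.
  destruct v as [|x w]; [reflexivity|]. simpl. unfold ptri.
  induction x; pfs; try rewrite IHx; auto.
Qed.
Global Opaque ptri. Global Hint Rewrite pf_ptri : pfdb.

Definition pcp0 : PR 2 := C2 padd (C1 ptri (C2 padd (Pjd 0 2) (Pjd 1 2))) (Pjd 1 2).
Lemma pf_pcp0 v : pf pcp0 v = cpair (v#0) (v#1).
Proof. unfold pcp0. pfs. rewrite cpair_tri. reflexivity. Qed.
Global Opaque pcp0. Global Hint Rewrite pf_pcp0 : pfdb.
Definition pcp {k} (x y : PR k) : PR k := C2 pcp0 x y.
Lemma pf_pcp {k} (x y : PR k) v : pf (pcp x y) v = cpair (pf x v) (pf y v).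
Proof. unfold pcp. pfs. reflexivity. Qed.
Global Opaque pcp. Global Hint Rewrite @pf_pcp : pfdb.

Definition podd : PR 1 := pprim (Z 0) (C2 psub (cst 1 2) (Pjd 1 2)).
Lemma pf_podd v : pf podd v = Nat.b2n (Nat.odd (v#0)).
Proof.
  destruct v as [|x w]; [reflexivity|]. simpl. unfold podd.
  induction x; pfs; auto. rewrite IHx.
  rewrite Nat.odd_succ, <- Nat.negb_odd. destruct (Nat.odd x); reflexivity.
Qed.
Global Opaque podd. Global Hint Rewrite pf_podd : pfdb.
Definition pdiv2 : PR 1 := pprim (Z 0) (C2 padd (Pjd 1 2) (C1 podd (Pjd 0 2))).
Lemma div2_S x : Nat.div2 (S x) = Nat.div2 x + Nat.b2n (Nat.odd x).
Proof.
  pose proof (Nat.div2_odd x). pose proof (Nat.div2_odd (S x)).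
  rewrite Nat.odd_succ, <- Nat.negb_odd in H0. destruct (Nat.odd x); simpl in *; lia.
Qed.
Lemma pf_pdiv2 v : pf pdiv2 v = Nat.div2 (v#0).
Proof.
  destruct v as [|x w]; [reflexivity|]. simpl. unfold pdiv2.
  induction x; pfs; auto. rewrite IHx. symmetry. apply div2_S.
Qed.
Global Opaque pdiv2. Global Hint Rewrite pf_pdiv2 : pfdb.
Definition piter : PR 2 := pprim (Pjd 0 1) (C1 pdiv2 (Pjd 1 3)).
Lemma testbit_iter a n : Nat.testbit a n = Nat.odd (Nat.iter n Nat.div2 a).
Proof.
  revert a. induction n; intros a; auto.
  change (Nat.testbit a (S n)) with (Nat.testbit (Nat.div2 a) n).
  rewrite IHn. rewrite Nat.iter_succ_r. reflexivity.
Qed.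
Lemma pf_piter l L w : pf piter (l :: L :: w) = Nat.iter l Nat.div2 L.
Proof. unfold piter. induction l; pfs; auto. Qed.
Global Opaque piter.
Definition pbit0 : PR 2 := C1 podd (C2 piter (Pjd 1 2) (Pjd 0 2)).
Lemma pf_pbit0 v : pf pbit0 v = Nat.b2n (Nat.testbit (v#0) (v#1)).
Proof. unfold pbit0. pfs. rewrite pf_piter, testbit_iter. reflexivity. Qed.
Global Opaque pbit0. Global Hint Rewrite pf_pbit0 : pfdb.
Definition pbit {k} (L l : PR k) : PR k := C2 pbit0 L l.
Lemma pf_pbit {k} (L l : PR k) v : pf (pbit L l) v = Nat.b2n (Nat.testbit (pf L v) (pf l v)).
Proof. unfold pbit. pfs. reflexivity. Qed.
Global Opaque pbit. Global Hint Rewrite @pf_pbit : pfdb.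

Definition ppow2 : PR 1 := pprim (cst 1 0) (C2 padd (Pjd 1 2) (Pjd 1 2)).
Lemma pf_ppow2 x w : pf ppow2 (x :: w) = 2 ^ x.
Proof.
  unfold ppow2.
  induction x; pfs; auto. rewrite IHx. simpl. lia.
Qed.
Global Opaque ppow2. Global Hint Rewrite pf_ppow2 : pfdb.


Definition Top := FImp FBot FBot.
Definition Neg (p : formula) := FImp p FBot.
Fixpoint BigAnd (m : nat) (F : nat -> formula) : formula :=
  match m with 0 => Top | S m => FAnd (F m) (BigAnd m F) end.
Fixpoint BigOr (m : nat) (F : nat -> formula) : formula :=
  match m with 0 => FBot | S m => FOr (F m) (BigOr m F) end.

Definition ctop := code Top.
Definition cbot := code FBot.

Definition shifted np : list (PR (S (S np))) := map (fun j => Pjd (S (S j)) (S (S np))) (seq 0 np).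
Lemma len_shifted np : length (Pjd 0 (S (S np)) :: shifted np) = S np.
Proof. simpl. unfold shifted. rewrite length_map, length_seq. reflexivity. Qed.

Lemma map_shifted np i r w : length w = np ->
  map (fun g => pf g (i :: r :: w)) (shifted np) = w.
Proof.
  intros <-. unfold shifted. rewrite map_map.
  transitivity (map (fun j => nth j w 0) (seq 0 (length w))).
  - apply map_ext_in. intros j Hj. apply in_seq in Hj. rewrite pf_Pjd by lia. reflexivity.
  - clear. induction w as [|x w IH]; [reflexivity|].
    simpl. f_equal. rewrite <- seq_shift, map_map. simpl. exact IH.
Qed.

Definition pbig (tag : nat) (base : nat) np (G : PR (S np)) : PR (S np) :=
  pprim (cst base np) (pcp (cst tag _) (pcp (pcomp G (Pjd 0 (S (S np)) :: shifted np) (len_shifted np)) (Pjd 1 _))).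

Lemma pf_pcomp {k m} (f : PR m) (gs : list (PR k)) H v :
  pf (pcomp f gs H) v = pf f (map (fun g => pf g v) gs).
Proof. Transparent pcomp. reflexivity. Opaque pcomp. Qed.

Lemma pf_pbigand np G (F : nat -> list nat -> formula) :
  (forall i w, length w = np -> pf G (i :: w) = code (F i w)) ->
  forall m w, length w = np -> pf (pbig 4 ctop np G) (m :: w) = code (BigAnd m (fun i => F i w)).
Proof.
  intros HG m w Hw. unfold pbig. induction m.
  - pfs. reflexivity.
  - pfs. rewrite pf_pcomp. simpl map. rewrite pf_Pjd by lia. simpl.
    rewrite map_shifted by auto. rewrite HG by auto. rewrite IHm. reflexivity.
Qed.
Lemma pf_pbigor np G (F : nat -> list nat -> formula) :
  (forall i w, length w = np -> pf G (i :: w) = code (F i w)) ->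
  forall m w, length w = np -> pf (pbig 5 cbot np G) (m :: w) = code (BigOr m (fun i => F i w)).
Proof.
  intros HG m w Hw. unfold pbig. induction m.
  - pfs. reflexivity.
  - pfs. rewrite pf_pcomp. simpl map. rewrite pf_Pjd by lia. simpl.
    rewrite map_shifted by auto. rewrite HG by auto. rewrite IHm. reflexivity.
Qed.

Definition ite (b : bool) (x y : formula) := if b then x else y.

Fixpoint cnt (N L : nat) : nat :=
  match N with 0 => 0 | S N => cnt N L + Nat.b2n (Nat.testbit L N) end.
Fixpoint subsetb (N L a : nat) : bool :=
  match N with 0 => true | S N => subsetb N L a && implb (Nat.testbit L N) (Nat.testbit a N) end.
Fixpoint disjb (N L a : nat) : bool :=
  match N with 0 => true | S N => disjb N L a && implb (Nat.testbit L N) (negb (Nat.testbit a N)) end.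
Definition cardok (c : cardp) (x : nat) : bool :=
  match c with Fin n => Nat.ltb x n | Omega => true end.

Definition GlbF N k L :=
  FAnd (BigAnd N (fun l => ite (Nat.testbit L l) (FLe k l) Top))
       (FAll (FImp (BigAnd N (fun l => ite (Nat.testbit L l) (FLe 0 (S l)) Top)) (FLe 0 (S k)))).
Definition LubF N k L :=
  FAnd (BigAnd N (fun l => ite (Nat.testbit L l) (FLe l k) Top))
       (FAll (FImp (BigAnd N (fun l => ite (Nat.testbit L l) (FLe (S l) 0) Top)) (FLe (S k) 0))).
Definition MonoF N a :=
  BigAnd N (fun k => BigAnd N (fun l =>
    ite (Nat.testbit a k && negb (Nat.testbit a l)) (Neg (FLe k l)) Top)).
Definition MeetF (al : cardp) N a :=
  BigAnd N (fun k => BigAnd (2 ^ N) (fun L =>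
    ite (cardok al (cnt N L) && subsetb N L a && negb (Nat.testbit a k)) (Neg (GlbF N k L)) Top)).
Definition JoinF (be : cardp) N a :=
  BigAnd N (fun k => BigAnd (2 ^ N) (fun L =>
    ite (cardok be (cnt N L) && disjb N L a && Nat.testbit a k) (Neg (LubF N k L)) Top)).
Definition Item0 a := ite (Nat.testbit a 0 && negb (Nat.testbit a 1)) Top FBot.
Definition ConsF al be N a :=
  FAnd (Item0 a) (FAnd (MonoF N a) (FAnd (MeetF al N a) (JoinF be N a))).
Definition Body al be N := FImp (Neg (FLe 0 1)) (BigOr (2 ^ N) (ConsF al be N)).
Definition alls (m : nat) (p : formula) := Nat.iter m FAll p.
Definition chi al be n := alls (S (S n)) (Body al be (S (S n))).

Lemma pf_ite {k} (b x y : PR k) v (c : bool) X Y :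
  pf b v = Nat.b2n c -> pf x v = code X -> pf y v = code Y ->
  pf (pite b x y) v = code (ite c X Y).
Proof. intros Hb Hx Hy. rewrite (pf_pite _ _ _ _ c) by auto. destruct c; auto. Qed.

Definition pFLe {k} (x y : PR k) : PR k := pcp (cst 1 k) (pcp x y).
Lemma pf_pFLe {k} (x y : PR k) v : pf (pFLe x y) v = code (FLe (pf x v) (pf y v)).
Proof. unfold pFLe. pfs. reflexivity. Qed.
Definition pNeg {k} (x : PR k) : PR k := pcp (cst 3 k) (pcp x (cst cbot k)).
Lemma pf_pNeg {k} (x : PR k) v X : pf x v = code X -> pf (pNeg x) v = code (Neg X).
Proof. intros H. unfold pNeg. pfs. rewrite H. reflexivity. Qed.
Definition pAnd {k} (x y : PR k) : PR k := pcp (cst 4 k) (pcp x y).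
Lemma pf_pAnd {k} (x y : PR k) v X Y : pf x v = code X -> pf y v = code Y -> pf (pAnd x y) v = code (FAnd X Y).
Proof. intros H1 H2. unfold pAnd. pfs. rewrite H1, H2. reflexivity. Qed.
Definition pImp {k} (x y : PR k) : PR k := pcp (cst 3 k) (pcp x y).
Lemma pf_pImp {k} (x y : PR k) v X Y : pf x v = code X -> pf y v = code Y -> pf (pImp x y) v = code (FImp X Y).
Proof. intros H1 H2. unfold pImp. pfs. rewrite H1, H2. reflexivity. Qed.
Definition pAll {k} (x : PR k) : PR k := pcp (cst 6 k) x.
Lemma pf_pAll {k} (x : PR k) v X : pf x v = code X -> pf (pAll x) v = code (FAll X).
Proof. intros H1. unfold pAll. pfs. rewrite H1. reflexivity. Qed.
Definition pTop {k} : PR k := cst ctop k.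
Lemma pf_pTop {k} v : pf (@pTop k) v = code Top.
Proof. unfold pTop. pfs. reflexivity. Qed.
Definition pBot {k} : PR k := cst cbot k.
Lemma pf_pBot {k} v : pf (@pBot k) v = code FBot.
Proof. unfold pBot. pfs. reflexivity. Qed.
Global Opaque pFLe pNeg pAnd pImp pAll pTop pBot.

(* GA inner: (l, k, L) *)
Definition gAi : PR 3 := pite (pbit (Pjd 2 3) (Pjd 0 3)) (pFLe (Pjd 1 3) (Pjd 0 3)) pTop.
Definition gA : PR 3 := pbig 4 ctop 2 gAi.
Lemma pf_gA N k L : pf gA [N; k; L] = code (BigAnd N (fun l => ite (Nat.testbit L l) (FLe k l) Top)).
Proof.
  apply (pf_pbigand 2 gAi (fun l w => ite (Nat.testbit (w#1) l) (FLe (w#0) l) Top)); [|reflexivity].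
  intros i w Hw. unfold gAi. apply pf_ite.
  - pfs. reflexivity.
  - rewrite pf_pFLe. rewrite !pf_Pjd by lia. reflexivity.
  - apply pf_pTop.
Qed.
Global Opaque gA. Global Hint Rewrite pf_gA : pfdb.

Definition gBi : PR 2 := pite (pbit (Pjd 1 2) (Pjd 0 2)) (pFLe (cst 0 2) (Scc (Pjd 0 2))) pTop.
Definition gB : PR 2 := pbig 4 ctop 1 gBi.
Lemma pf_gB N L : pf gB [N; L] = code (BigAnd N (fun l => ite (Nat.testbit L l) (FLe 0 (S l)) Top)).
Proof.
  apply (pf_pbigand 1 gBi (fun l w => ite (Nat.testbit (w#0) l) (FLe 0 (S l)) Top)); [|reflexivity].
  intros i w Hw. unfold gBi. apply pf_ite.
  - pfs. reflexivity.
  - rewrite pf_pFLe. pfs. reflexivity.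
  - apply pf_pTop.
Qed.
Global Opaque gB. Global Hint Rewrite pf_gB : pfdb.

Definition pglb : PR 3 := pAnd gA (pAll (pImp (C2 gB (Pjd 0 3) (Pjd 2 3)) (pFLe (cst 0 3) (Scc (Pjd 1 3))))).
Lemma pf_pglb N k L : pf pglb [N; k; L] = code (GlbF N k L).
Proof.
  unfold pglb, GlbF. apply pf_pAnd. apply pf_gA. apply pf_pAll. apply pf_pImp.
  pfs. reflexivity. rewrite pf_pFLe. pfs. reflexivity.
Qed.
Global Opaque pglb. Global Hint Rewrite pf_pglb : pfdb.

Definition lAi : PR 3 := pite (pbit (Pjd 2 3) (Pjd 0 3)) (pFLe (Pjd 0 3) (Pjd 1 3)) pTop.
Definition lA : PR 3 := pbig 4 ctop 2 lAi.
Lemma pf_lA N k L : pf lA [N; k; L] = code (BigAnd N (fun l => ite (Nat.testbit L l) (FLe l k) Top)).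
Proof.
  apply (pf_pbigand 2 lAi (fun l w => ite (Nat.testbit (w#1) l) (FLe l (w#0)) Top)); [|reflexivity].
  intros i w Hw. unfold lAi. apply pf_ite.
  - pfs. reflexivity.
  - rewrite pf_pFLe. rewrite !pf_Pjd by lia. reflexivity.
  - apply pf_pTop.
Qed.
Global Opaque lA. Global Hint Rewrite pf_lA : pfdb.
Definition lBi : PR 2 := pite (pbit (Pjd 1 2) (Pjd 0 2)) (pFLe (Scc (Pjd 0 2)) (cst 0 2)) pTop.
Definition lB : PR 2 := pbig 4 ctop 1 lBi.
Lemma pf_lB N L : pf lB [N; L] = code (BigAnd N (fun l => ite (Nat.testbit L l) (FLe (S l) 0) Top)).
Proof.
  apply (pf_pbigand 1 lBi (fun l w => ite (Nat.testbit (w#0) l) (FLe (S l) 0) Top)); [|reflexivity].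
  intros i w Hw. unfold lBi. apply pf_ite.
  - pfs. reflexivity.
  - rewrite pf_pFLe. pfs. reflexivity.
  - apply pf_pTop.
Qed.
Global Opaque lB. Global Hint Rewrite pf_lB : pfdb.
Definition plub : PR 3 := pAnd lA (pAll (pImp (C2 lB (Pjd 0 3) (Pjd 2 3)) (pFLe (Scc (Pjd 1 3)) (cst 0 3)))).
Lemma pf_plub N k L : pf plub [N; k; L] = code (LubF N k L).
Proof.
  unfold plub, LubF. apply pf_pAnd. apply pf_lA. apply pf_pAll. apply pf_pImp.
  pfs. reflexivity. rewrite pf_pFLe. pfs. reflexivity.
Qed.
Global Opaque plub. Global Hint Rewrite pf_plub : pfdb.

Definition pcnt : PR 2 := pprim (Z 1) (C2 padd (Pjd 1 3) (pbit (Pjd 2 3) (Pjd 0 3))).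
Lemma pf_pcnt N L : pf pcnt [N; L] = cnt N L.
Proof. unfold pcnt. induction N; pfs; try rewrite IHN; auto. Qed.
Global Opaque pcnt. Global Hint Rewrite pf_pcnt : pfdb.

Definition psubset : PR 3 := pprim (cst 1 2) (pand (Pjd 1 4) (pite (pbit (Pjd 2 4) (Pjd 0 4)) (pbit (Pjd 3 4) (Pjd 0 4)) (cst 1 4))).
Lemma pf_psubset N L a : pf psubset [N; L; a] = Nat.b2n (subsetb N L a).
Proof.
  unfold psubset. induction N; pfs; auto.
  apply pf_pand. pfs. exact IHN.
  rewrite (pf_pite _ _ _ _ (Nat.testbit L N)) by (pfs; reflexivity).
  destruct (Nat.testbit L N); pfs; reflexivity.
Qed.
Global Opaque psubset. Global Hint Rewrite pf_psubset : pfdb.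
Definition pdisj : PR 3 := pprim (cst 1 2) (pand (Pjd 1 4) (pite (pbit (Pjd 2 4) (Pjd 0 4)) (pnot (pbit (Pjd 3 4) (Pjd 0 4))) (cst 1 4))).
Lemma pf_pdisj N L a : pf pdisj [N; L; a] = Nat.b2n (disjb N L a).
Proof.
  unfold pdisj. induction N; pfs; auto.
  apply pf_pand. pfs. exact IHN.
  rewrite (pf_pite _ _ _ _ (Nat.testbit L N)) by (pfs; reflexivity).
  destruct (Nat.testbit L N); pfs; [|reflexivity].
  apply pf_pnot. pfs. reflexivity.
Qed.
Global Opaque pdisj. Global Hint Rewrite pf_pdisj : pfdb.

Definition pcard (c : cardp) : PR 1 :=
  match c with Fin n => plt (Pjd 0 1) (cst n 1) | Omega => cst 1 1 end.
Lemma pf_pcard c x : pf (pcard c) [x] = Nat.b2n (cardok c x).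
Proof. destruct c; simpl pcard; [rewrite pf_plt|]; pfs; reflexivity. Qed.
Global Opaque pcard. Global Hint Rewrite pf_pcard : pfdb.

(* meet inner: (L, N, a, k) *)
Definition mi (al : cardp) : PR 4 :=
  pite (pand (pand (C1 (pcard al) (C2 pcnt (Pjd 1 4) (Pjd 0 4))) (C3 psubset (Pjd 1 4) (Pjd 0 4) (Pjd 2 4)))
             (pnot (pbit (Pjd 2 4) (Pjd 3 4))))
       (pNeg (C3 pglb (Pjd 1 4) (Pjd 3 4) (Pjd 0 4))) pTop.
Definition mo al : PR 3 := C4 (pbig 4 ctop 3 (mi al)) (C1 ppow2 (Pjd 1 3)) (Pjd 1 3) (Pjd 2 3) (Pjd 0 3).
Definition pmeet al : PR 2 := C3 (pbig 4 ctop 2 (mo al)) (Pjd 0 2) (Pjd 0 2) (Pjd 1 2).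
Lemma pf_mo al k N a : pf (mo al) [k; N; a] = code (BigAnd (2 ^ N) (fun L =>
    ite (cardok al (cnt N L) && subsetb N L a && negb (Nat.testbit a k)) (Neg (GlbF N k L)) Top)).
Proof.
  unfold mo. pfs.
  apply (pf_pbigand 3 (mi al) (fun L w =>
    ite (cardok al (cnt (w#0) L) && subsetb (w#0) L (w#1) && negb (Nat.testbit (w#1) (w#2))) (Neg (GlbF (w#0) (w#2) L)) Top)); [|reflexivity].
  intros i w Hw. destruct w as [|N' [|a' [|k' [|]]]]; simpl in Hw; try lia.
  unfold mi. apply pf_ite.
  - apply pf_pand. apply pf_pand. pfs. reflexivity. pfs. reflexivity. apply pf_pnot. pfs. reflexivity.
  - apply pf_pNeg. pfs. reflexivity.
  - apply pf_pTop.
Qed.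
Global Opaque mo. Global Hint Rewrite pf_mo : pfdb.
Lemma pf_pmeet al N a : pf (pmeet al) [N; a] = code (MeetF al N a).
Proof.
  unfold pmeet. pfs.
  apply (pf_pbigand 2 (mo al) (fun k w => BigAnd (2 ^ (w#0)) (fun L =>
    ite (cardok al (cnt (w#0) L) && subsetb (w#0) L (w#1) && negb (Nat.testbit (w#1) k)) (Neg (GlbF (w#0) k L)) Top))); [|reflexivity].
  intros i w Hw. destruct w as [|N' [|a' [|]]]; simpl in Hw; try lia. apply pf_mo.
Qed.
Global Opaque pmeet. Global Hint Rewrite pf_pmeet : pfdb.

Definition ji (be : cardp) : PR 4 :=
  pite (pand (pand (C1 (pcard be) (C2 pcnt (Pjd 1 4) (Pjd 0 4))) (C3 pdisj (Pjd 1 4) (Pjd 0 4) (Pjd 2 4)))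
             (pbit (Pjd 2 4) (Pjd 3 4)))
       (pNeg (C3 plub (Pjd 1 4) (Pjd 3 4) (Pjd 0 4))) pTop.
Definition jo be : PR 3 := C4 (pbig 4 ctop 3 (ji be)) (C1 ppow2 (Pjd 1 3)) (Pjd 1 3) (Pjd 2 3) (Pjd 0 3).
Definition pjoin be : PR 2 := C3 (pbig 4 ctop 2 (jo be)) (Pjd 0 2) (Pjd 0 2) (Pjd 1 2).
Lemma pf_jo be k N a : pf (jo be) [k; N; a] = code (BigAnd (2 ^ N) (fun L =>
    ite (cardok be (cnt N L) && disjb N L a && Nat.testbit a k) (Neg (LubF N k L)) Top)).
Proof.
  unfold jo. pfs.
  apply (pf_pbigand 3 (ji be) (fun L w =>
    ite (cardok be (cnt (w#0) L) && disjb (w#0) L (w#1) && Nat.testbit (w#1) (w#2)) (Neg (LubF (w#0) (w#2) L)) Top)); [|reflexivity].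
  intros i w Hw. destruct w as [|N' [|a' [|k' [|]]]]; simpl in Hw; try lia.
  unfold ji. apply pf_ite.
  - apply pf_pand. apply pf_pand. pfs. reflexivity. pfs. reflexivity. pfs. reflexivity.
  - apply pf_pNeg. pfs. reflexivity.
  - apply pf_pTop.
Qed.
Global Opaque jo. Global Hint Rewrite pf_jo : pfdb.
Lemma pf_pjoin be N a : pf (pjoin be) [N; a] = code (JoinF be N a).
Proof.
  unfold pjoin. pfs.
  apply (pf_pbigand 2 (jo be) (fun k w => BigAnd (2 ^ (w#0)) (fun L =>
    ite (cardok be (cnt (w#0) L) && disjb (w#0) L (w#1) && Nat.testbit (w#1) k) (Neg (LubF (w#0) k L)) Top))); [|reflexivity].
  intros i w Hw. destruct w as [|N' [|a' [|]]]; simpl in Hw; try lia. apply pf_jo.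
Qed.
Global Opaque pjoin. Global Hint Rewrite pf_pjoin : pfdb.

(* mono: inner (l, a, k) *)
Definition monoin : PR 3 := pite (pand (pbit (Pjd 1 3) (Pjd 2 3)) (pnot (pbit (Pjd 1 3) (Pjd 0 3))))
   (pNeg (pFLe (Pjd 2 3) (Pjd 0 3))) pTop.
Definition monok : PR 3 := C3 (pbig 4 ctop 2 monoin) (Pjd 1 3) (Pjd 2 3) (Pjd 0 3).
Definition pmono : PR 2 := C3 (pbig 4 ctop 2 monok) (Pjd 0 2) (Pjd 0 2) (Pjd 1 2).
Lemma pf_monok k N a : pf monok [k; N; a] = code (BigAnd N (fun l =>
    ite (Nat.testbit a k && negb (Nat.testbit a l)) (Neg (FLe k l)) Top)).
Proof.
  unfold monok. pfs.
  apply (pf_pbigand 2 monoin (fun l w =>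
    ite (Nat.testbit (w#0) (w#1) && negb (Nat.testbit (w#0) l)) (Neg (FLe (w#1) l)) Top)); [|reflexivity].
  intros i w Hw. destruct w as [|a' [|k' [|]]]; simpl in Hw; try lia.
  unfold monoin. apply pf_ite.
  - apply pf_pand. pfs. reflexivity. apply pf_pnot. pfs. reflexivity.
  - apply pf_pNeg. rewrite pf_pFLe. pfs. reflexivity.
  - apply pf_pTop.
Qed.
Global Opaque monok. Global Hint Rewrite pf_monok : pfdb.
Lemma pf_pmono N a : pf pmono [N; a] = code (MonoF N a).
Proof.
  unfold pmono. pfs.
  apply (pf_pbigand 2 monok (fun k w => BigAnd (w#0) (fun l =>
    ite (Nat.testbit (w#1) k && negb (Nat.testbit (w#1) l)) (Neg (FLe k l)) Top))); [|reflexivity].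
  intros i w Hw. destruct w as [|N' [|a' [|]]]; simpl in Hw; try lia. apply pf_monok.
Qed.
Global Opaque pmono. Global Hint Rewrite pf_pmono : pfdb.

Definition item0 : PR 1 := pite (pand (pbit (Pjd 0 1) (cst 0 1)) (pnot (pbit (Pjd 0 1) (cst 1 1)))) pTop pBot.
Lemma pf_item0 a : pf item0 [a] = code (Item0 a).
Proof.
  unfold item0, Item0. apply pf_ite.
  - apply pf_pand. pfs. reflexivity. apply pf_pnot. pfs. reflexivity.
  - apply pf_pTop. - apply pf_pBot.
Qed.
Global Opaque item0. Global Hint Rewrite pf_item0 : pfdb.

Definition pcons al be : PR 2 := pAnd (C1 item0 (Pjd 0 2)) (pAnd (C2 pmono (Pjd 1 2) (Pjd 0 2))
   (pAnd (C2 (pmeet al) (Pjd 1 2) (Pjd 0 2)) (C2 (pjoin be) (Pjd 1 2) (Pjd 0 2)))).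
Lemma pf_pcons al be a N : pf (pcons al be) [a; N] = code (ConsF al be N a).
Proof.
  unfold pcons, ConsF. apply pf_pAnd. pfs. reflexivity. apply pf_pAnd. pfs. reflexivity.
  apply pf_pAnd; pfs; reflexivity.
Qed.
Global Opaque pcons. Global Hint Rewrite pf_pcons : pfdb.

Definition pbody al be : PR 1 := pImp (pNeg (pFLe (cst 0 1) (cst 1 1))) (C2 (pbig 5 cbot 1 (pcons al be)) (C1 ppow2 (Pjd 0 1)) (Pjd 0 1)).
Lemma pf_pbody al be N : pf (pbody al be) [N] = code (Body al be N).
Proof.
  unfold pbody, Body. apply pf_pImp. apply pf_pNeg. rewrite pf_pFLe. pfs. reflexivity.
  pfs. apply (pf_pbigor 1 (pcons al be) (fun a w => ConsF al be (w#0) a)); [|reflexivity].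
  intros i w Hw. destruct w as [|N' [|]]; simpl in Hw; try lia. apply pf_pcons.
Qed.
Global Opaque pbody. Global Hint Rewrite pf_pbody : pfdb.

Definition palls : PR 2 := pprim (Pjd 0 1) (pAll (Pjd 1 3)).
Lemma pf_palls m X : pf palls [m; code X] = code (alls m X).
Proof.
  unfold palls. induction m; pfs. reflexivity.
  apply pf_pAll. pfs. exact IHm.
Qed.
Global Opaque palls.
Definition pchi al be : PR 1 := C2 palls (Scc (Scc (Pjd 0 1))) (C1 (pbody al be) (Scc (Scc (Pjd 0 1)))).
Lemma pf_pchi al be n : pf (pchi al be) [n] = code (chi al be n).
Proof. unfold pchi. rewrite pf_C2, !pf_C1, !pf_Scc, pf_Pjd by lia. simpl nth. rewrite pf_pbody. apply pf_palls. Qed.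
Global Opaque pchi. Global Hint Rewrite pf_pchi : pfdb.

Definition pE al be : PR 2 := pprim (peq (C1 (pchi al be) (cst 0 1)) (Pjd 0 1))
   (por (Pjd 1 3) (peq (C1 (pchi al be) (Scc (Pjd 0 3))) (Pjd 2 3))).
Lemma existsb_seq1 (f : nat -> bool) : existsb f (seq 0 1) = f 0.
Proof. simpl. apply Bool.orb_false_r. Qed.
Lemma existsb_seqS (f : nat -> bool) m : existsb f (seq 0 (S m)) = existsb f (seq 0 m) || f m.
Proof. rewrite seq_S, existsb_app. simpl. rewrite Bool.orb_false_r. reflexivity. Qed.
Lemma pf_pE al be m x : pf (pE al be) [m; x] =
   Nat.b2n (existsb (fun n => Nat.eqb (code (chi al be n)) x) (seq 0 (S m))).
Proof.
  unfold pE. induction m.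
  - rewrite pf_pprim_0, pf_peq, pf_C1, pf_cst, pf_pchi, pf_Pjd by lia.
    rewrite existsb_seq1. cbn [nth]. reflexivity.
  - rewrite pf_pprim_S.
    rewrite (pf_por _ _ _ (existsb (fun n => Nat.eqb (code (chi al be n)) x) (seq 0 (S m)))
              (Nat.eqb (code (chi al be (S m))) x)).
    + rewrite (existsb_seqS (fun n => Nat.eqb (code (chi al be n)) x) (S m)). reflexivity.
    + rewrite pf_Pjd by (simpl; lia). exact IHm.
    + rewrite pf_peq, pf_C1, pf_Scc, !pf_Pjd by (simpl; lia). cbn [nth]. rewrite pf_pchi. reflexivity.
Qed.
Global Opaque pE.
Definition pR al be : PR 1 := C2 (pE al be) (Pjd 0 1) (Pjd 0 1).
Lemma pf_pR al be x : pf (pR al be) [x] =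
   Nat.b2n (existsb (fun n => Nat.eqb (code (chi al be n)) x) (seq 0 (S x))).
Proof. unfold pR. rewrite pf_C2, !pf_Pjd by lia. apply pf_pE. Qed.

Lemma tri_ge n : n <= tri n.
Proof. induction n; simpl; lia. Qed.
Lemma code_alls_ge m X : m <= code (alls m X).
Proof.
  induction m; [lia|]. unfold alls in *. change (code (Nat.iter (S m) FAll X)) with (cpair 6 (code (Nat.iter m FAll X))).
  rewrite cpair_tri. pose proof (tri_ge (6 + code (Nat.iter m FAll X))). lia.
Qed.
Lemma code_chi_ge al be n : n <= code (chi al be n).
Proof. unfold chi. pose proof (code_alls_ge (S (S n)) (Body al be (S (S n)))). lia. Qed.

Lemma chi_recursive al be :
  recursive_formula_set (fun f => exists n, f = chi al be n).
Proof.
  exists (pp (pR al be)). intros x.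
  pose proof (pok (pR al be) [x] (le_n 1)) as H. rewrite pf_pR in H.
  set (b := existsb (fun n => Nat.eqb (code (chi al be n)) x) (seq 0 (S x))) in H.
  assert (Hb : b = true <-> exists n, code (chi al be n) = x).
  { unfold b. rewrite existsb_exists. split.
    - intros [n [_ Hn]]. apply Nat.eqb_eq in Hn. eauto.
    - intros [n Hn]. exists n. split. apply in_seq. pose proof (code_chi_ge al be n). lia. apply Nat.eqb_eq. auto. }
  clearbody b. split.
  - intros [f [[n ->] Hc]]. assert (b = true) as E by (apply Hb; eauto). rewrite E in H. exact H.
  - intros Hn. destruct b. exfalso. destruct (proj1 Hb eq_refl) as [n Hn']. apply Hn. eauto. exact H.
Qed.


Lemma sat_BigAnd {T} (le : T -> T -> Prop) env m F :
  sat le env (BigAnd m F) <-> (forall i, i < m -> sat le env (F i)).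
Proof.
  induction m; simpl.
  - split; intros; [lia|]. unfold Top. simpl. auto.
  - rewrite IHm. split.
    + intros [H1 H2] i Hi. destruct (Nat.eq_dec i m); subst; auto. apply H2; lia.
    + intros H. split; auto.
Qed.
Lemma sat_BigOr {T} (le : T -> T -> Prop) env m F :
  sat le env (BigOr m F) <-> (exists i, i < m /\ sat le env (F i)).
Proof.
  induction m; simpl.
  - split; [tauto|]. intros [i [Hi _]]; lia.
  - rewrite IHm. split.
    + intros [H|[i [Hi H]]]; eauto.
    + intros [i [Hi H]]. destruct (Nat.eq_dec i m); subst; auto. right. exists i. split; auto; lia.
Qed.
Lemma sat_ite {T} (le : T -> T -> Prop) env b X :
  sat le env (ite b X Top) <-> (b = true -> sat le env X).
Proof. unfold ite, Top; destruct b; simpl; split; auto; intros; discriminate. Qed.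
Lemma sat_Neg {T} (le : T -> T -> Prop) env X : sat le env (Neg X) <-> ~ sat le env X.
Proof. reflexivity. Qed.

Lemma alls_S m p : alls (S m) p = alls m (FAll p).
Proof. unfold alls. apply Nat.iter_succ_r. Qed.
Lemma sat_alls {T} (le : T -> T -> Prop) m : forall p env,
  sat le env (alls m p) <-> (forall l, length l = m -> sat le (l ++ env) p).
Proof.
  induction m; intros p env.
  - simpl. split; auto. intros H l Hl. destruct l; [exact H|discriminate].
    intros H. apply (H []). reflexivity.
  - rewrite alls_S, IHm. split.
    + intros H [|x l] Hl; [discriminate|]. simpl in Hl. injection Hl as Hl.
      apply (H l Hl x).
    + intros H l Hl x. apply (H (x :: l)). simpl. auto.
Qed.

Definition Sset {T} (e : nat -> T) N L (y : T) : Prop :=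
  exists l, l < N /\ Nat.testbit L l = true /\ e l = y.

Lemma nth_error_nth' {T} (env : list T) i d : i < length env -> nth_error env i = Some (nth i env d).
Proof. intros H. apply nth_error_nth'. auto. Qed.

Lemma sat_FLe {T} (le : T -> T -> Prop) env d i j :
  i < length env -> j < length env -> (sat le env (FLe i j) <-> le (nth i env d) (nth j env d)).
Proof. intros Hi Hj. simpl. rewrite !(nth_error_nth' env _ d) by auto. reflexivity. Qed.

Lemma sat_GlbF {T} (le : T -> T -> Prop) env d N k L :
  length env = N -> k < N ->
  (sat le env (GlbF N k L) <-> is_glb le (Sset (fun l => nth l env d) N L) (nth k env d)).
Proof.
  intros HN Hk. unfold GlbF. simpl sat at 1. rewrite sat_BigAnd. unfold is_glb, Sset.
  split.
  - intros [HA HB]. split.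
    + intros s [l [Hl [Hb <-]]]. specialize (HA l Hl). rewrite sat_ite in HA.
      rewrite <- (sat_FLe le env d) by lia. auto.
    + intros y Hy. specialize (HB y). simpl in HB. rewrite sat_BigAnd in HB.
      assert (Hk' : S k < length (y :: env)) by (simpl; lia).
      rewrite <- (sat_FLe le (y :: env) d 0 (S k)) by (simpl; lia). simpl nth in *.
      apply HB. intros l Hl. rewrite sat_ite. intros Hb.
      rewrite (sat_FLe le (y :: env) d) by (simpl; lia). simpl. apply Hy. eauto.
  - intros [HA HB]. split.
    + intros l Hl. rewrite sat_ite. intros Hb. rewrite (sat_FLe le env d) by lia. apply HA. eauto.
    + intros y. simpl sat. rewrite sat_BigAnd. intros Hy.
      rewrite (sat_FLe le (y :: env) d 0 (S k)) by (simpl; lia). simpl nth.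
      apply HB. intros s [l [Hl [Hb <-]]]. specialize (Hy l Hl). rewrite sat_ite in Hy.
      specialize (Hy Hb). rewrite (sat_FLe le (y :: env) d) in Hy by (simpl; lia). exact Hy.
Qed.

Lemma sat_LubF {T} (le : T -> T -> Prop) env d N k L :
  length env = N -> k < N ->
  (sat le env (LubF N k L) <-> is_lub le (Sset (fun l => nth l env d) N L) (nth k env d)).
Proof.
  intros HN Hk. unfold LubF. simpl sat at 1. rewrite sat_BigAnd. unfold is_lub, Sset.
  split.
  - intros [HA HB]. split.
    + intros s [l [Hl [Hb <-]]]. specialize (HA l Hl). rewrite sat_ite in HA.
      rewrite <- (sat_FLe le env d) by lia. auto.
    + intros y Hy. specialize (HB y). simpl in HB. rewrite sat_BigAnd in HB.
      rewrite <- (sat_FLe le (y :: env) d (S k) 0) by (simpl; lia). simpl nth in *.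
      apply HB. intros l Hl. rewrite sat_ite. intros Hb.
      rewrite (sat_FLe le (y :: env) d) by (simpl; lia). simpl. apply Hy. eauto.
  - intros [HA HB]. split.
    + intros l Hl. rewrite sat_ite. intros Hb. rewrite (sat_FLe le env d) by lia. apply HA. eauto.
    + intros y. simpl sat. rewrite sat_BigAnd. intros Hy.
      rewrite (sat_FLe le (y :: env) d (S k) 0) by (simpl; lia). simpl nth.
      apply HB. intros s [l [Hl [Hb <-]]]. specialize (Hy l Hl). rewrite sat_ite in Hy.
      specialize (Hy Hb). rewrite (sat_FLe le (y :: env) d) in Hy by (simpl; lia). exact Hy.
Qed.

Definition SC (al be : cardp) {T} (le : T -> T -> Prop) (e : nat -> T) N (bt : nat -> bool) : Prop :=
  bt 0 = true /\ bt 1 = false /\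
  (forall k l, k < N -> l < N -> bt k = true -> bt l = false -> ~ le (e k) (e l)) /\
  (forall k L, k < N -> L < 2 ^ N -> cardok al (cnt N L) = true ->
     (forall l, l < N -> Nat.testbit L l = true -> bt l = true) -> bt k = false ->
     ~ is_glb le (Sset e N L) (e k)) /\
  (forall k L, k < N -> L < 2 ^ N -> cardok be (cnt N L) = true ->
     (forall l, l < N -> Nat.testbit L l = true -> bt l = false) -> bt k = true ->
     ~ is_lub le (Sset e N L) (e k)).

Lemma subsetb_spec N L a : subsetb N L a = true <-> (forall l, l < N -> Nat.testbit L l = true -> Nat.testbit a l = true).
Proof.
  induction N; simpl.
  - split; auto; intros; lia.
  - rewrite andb_true_iff, IHN. split.
    + intros [H1 H2] l Hl Hb. destruct (Nat.eq_dec l N); subst.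
      * rewrite Hb in H2. exact H2.
      * apply H1; auto; lia.
    + intros H. split. intros; apply H; auto; lia.
      destruct (Nat.testbit L N) eqn:E; simpl; auto.
Qed.
Lemma disjb_spec N L a : disjb N L a = true <-> (forall l, l < N -> Nat.testbit L l = true -> Nat.testbit a l = false).
Proof.
  induction N; simpl.
  - split; auto; intros; lia.
  - rewrite andb_true_iff, IHN. split.
    + intros [H1 H2] l Hl Hb. destruct (Nat.eq_dec l N); subst.
      * rewrite Hb in H2. simpl in H2. apply negb_true_iff. exact H2.
      * apply H1; auto; lia.
    + intros H. split. intros; apply H; auto; lia.
      destruct (Nat.testbit L N) eqn:E; simpl; auto. rewrite H; auto.
Qed.

Lemma sat_ConsF al be {T} (le : T -> T -> Prop) env d N a :
  length env = N ->
  (sat le env (ConsF al be N a) <-> SC al be le (fun l => nth l env d) N (Nat.testbit a)).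
Proof.
  intros HN. unfold ConsF, SC. cbn [sat].
  assert (HI : sat le env (Item0 a) <-> (Nat.testbit a 0 = true /\ Nat.testbit a 1 = false)).
  { unfold Item0, ite. destruct (Nat.testbit a 0), (Nat.testbit a 1); simpl; unfold Top; simpl; intuition discriminate. }
  assert (HM : sat le env (MonoF N a) <-> (forall k l, k < N -> l < N -> Nat.testbit a k = true -> Nat.testbit a l = false -> ~ le (nth k env d) (nth l env d))).
  { unfold MonoF. rewrite sat_BigAnd. split.
    - intros H k l Hk Hl H1 H2. specialize (H k Hk). rewrite sat_BigAnd in H. specialize (H l Hl).
      rewrite sat_ite, sat_Neg in H. rewrite <- (sat_FLe le env d) by lia. apply H. rewrite H1, H2; reflexivity.
    - intros H k Hk. rewrite sat_BigAnd. intros l Hl. rewrite sat_ite, sat_Neg.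
      intros Hb. apply andb_true_iff in Hb. destruct Hb as [H1 H2]. apply negb_true_iff in H2.
      rewrite (sat_FLe le env d) by lia. apply H; auto. }
  assert (HG : sat le env (MeetF al N a) <-> (forall k L, k < N -> L < 2 ^ N -> cardok al (cnt N L) = true ->
     (forall l, l < N -> Nat.testbit L l = true -> Nat.testbit a l = true) -> Nat.testbit a k = false ->
     ~ is_glb le (Sset (fun l => nth l env d) N L) (nth k env d))).
  { unfold MeetF. rewrite sat_BigAnd. split.
    - intros H k L Hk HL Hc Hs Hak. specialize (H k Hk). rewrite sat_BigAnd in H. specialize (H L HL).
      rewrite sat_ite, sat_Neg in H. rewrite <- sat_GlbF by auto. apply H.
      rewrite Hc, Hak. simpl. rewrite andb_true_r. apply subsetb_spec. auto.
    - intros H k Hk. rewrite sat_BigAnd. intros L HL. rewrite sat_ite, sat_Neg.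
      intros Hb. apply andb_true_iff in Hb. destruct Hb as [Hb H3]. apply andb_true_iff in Hb.
      destruct Hb as [H1 H2]. apply negb_true_iff in H3. rewrite subsetb_spec in H2.
      rewrite sat_GlbF by auto. apply H; auto. }
  assert (HJ : sat le env (JoinF be N a) <-> (forall k L, k < N -> L < 2 ^ N -> cardok be (cnt N L) = true ->
     (forall l, l < N -> Nat.testbit L l = true -> Nat.testbit a l = false) -> Nat.testbit a k = true ->
     ~ is_lub le (Sset (fun l => nth l env d) N L) (nth k env d))).
  { unfold JoinF. rewrite sat_BigAnd. split.
    - intros H k L Hk HL Hc Hs Hak. specialize (H k Hk). rewrite sat_BigAnd in H. specialize (H L HL).
      rewrite sat_ite, sat_Neg in H. rewrite <- sat_LubF by auto. apply H.
      rewrite Hc, Hak. rewrite andb_true_r. simpl. apply disjb_spec. auto.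
    - intros H k Hk. rewrite sat_BigAnd. intros L HL. rewrite sat_ite, sat_Neg.
      intros Hb. apply andb_true_iff in Hb. destruct Hb as [Hb H3]. apply andb_true_iff in Hb.
      destruct Hb as [H1 H2]. rewrite disjb_spec in H2.
      rewrite sat_LubF by auto. apply H; auto. }
  rewrite HI, HM, HG, HJ. tauto.
Qed.

Lemma sat_Body al be {T} (le : T -> T -> Prop) env d N :
  length env = N -> 2 <= N ->
  (sat le env (Body al be N) <-> (~ le (nth 0 env d) (nth 1 env d) ->
     exists a, a < 2 ^ N /\ SC al be le (fun l => nth l env d) N (Nat.testbit a))).
Proof.
  intros HN H2. unfold Body. change (sat le env (FImp (Neg (FLe 0 1)) (BigOr (2 ^ N) (ConsF al be N))))
    with (sat le env (Neg (FLe 0 1)) -> sat le env (BigOr (2 ^ N) (ConsF al be N))).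
  rewrite sat_Neg, sat_BigOr, (sat_FLe le env d) by lia.
  split; intros H Hn; destruct (H Hn) as [a [Ha Hs]]; exists a; split; auto.
  - rewrite <- sat_ConsF; eauto.
  - rewrite sat_ConsF; eauto.
Qed.

Lemma sat_chi al be {T} (le : T -> T -> Prop) n (d : T) :
  sat le [] (chi al be n) <->
  (forall env, length env = S (S n) -> ~ le (nth 0 env d) (nth 1 env d) ->
     exists a, a < 2 ^ S (S n) /\ SC al be le (fun l => nth l env d) (S (S n)) (Nat.testbit a)).
Proof.
  unfold chi. rewrite sat_alls. split.
  - intros H env Hl. specialize (H env Hl). rewrite app_nil_r in H.
    rewrite sat_Body in H by lia. exact H.
  - intros H env Hl. rewrite app_nil_r. rewrite sat_Body by lia. apply H; auto.
Qed.


Lemma closed_BigAnd k m F : (forall i, i < m -> closed_at k (F i)) -> closed_at k (BigAnd m F).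
Proof. induction m; simpl; intros H. unfold Top; simpl; auto. split; auto. Qed.
Lemma closed_BigOr k m F : (forall i, i < m -> closed_at k (F i)) -> closed_at k (BigOr m F).
Proof. induction m; simpl; intros H. auto. split; auto. Qed.
Lemma closed_ite k b X : closed_at k X -> closed_at k (ite b X Top).
Proof. unfold ite, Top. destruct b; simpl; auto. Qed.
Lemma closed_alls m : forall k p, closed_at (m + k) p -> closed_at k (alls m p).
Proof.
  induction m; intros k p H.
  - exact H.
  - rewrite alls_S. apply IHm. simpl. replace (m + S k) with (S (m + k)) by lia. exact H.
Qed.

Lemma closed_GlbF N k L : k < N -> closed_at N (GlbF N k L).
Proof.
  intros Hk. unfold GlbF. simpl. split; [|split; [|split; lia]].
  - apply closed_BigAnd. intros l Hl. apply closed_ite. simpl. lia.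
  - apply closed_BigAnd. intros l Hl. apply closed_ite. simpl. lia.
Qed.
Lemma closed_LubF N k L : k < N -> closed_at N (LubF N k L).
Proof.
  intros Hk. unfold LubF. simpl. split; [|split; [|split; lia]].
  - apply closed_BigAnd. intros l Hl. apply closed_ite. simpl. lia.
  - apply closed_BigAnd. intros l Hl. apply closed_ite. simpl. lia.
Qed.

Lemma chi_sentence al be n : sentence (chi al be n).
Proof.
  unfold sentence, chi. apply closed_alls. rewrite Nat.add_0_r.
  set (N := S (S n)). assert (HN : 2 <= N) by (unfold N; lia). clearbody N.
  unfold Body. simpl. split. split; auto. lia.
  apply closed_BigOr. intros a _. unfold ConsF. simpl. split; [|split; [|split]].
  - unfold Item0, ite. destruct (_ && _); simpl; auto.
  - apply closed_BigAnd. intros k Hk. apply closed_BigAnd. intros l Hl. apply closed_ite. simpl. auto.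
  - apply closed_BigAnd. intros k Hk. apply closed_BigAnd. intros L _. apply closed_ite. simpl.
    split; auto. apply closed_GlbF; auto.
  - apply closed_BigAnd. intros k Hk. apply closed_BigAnd. intros L _. apply closed_ite. simpl.
    split; auto. apply closed_LubF; auto.
Qed.


Lemma cnt_filter N L : cnt N L = length (filter (fun l => Nat.testbit L l) (seq 0 N)).
Proof.
  induction N; auto. rewrite seq_S, filter_app, length_app, <- IHN. simpl.
  destruct (Nat.testbit L N); simpl; lia.
Qed.

Lemma dedup {T} (l : list T) : exists l', NoDup l' /\ (forall x, In x l <-> In x l') /\ length l' <= length l.
Proof.
  induction l as [|a l [l' [H1 [H2 H3]]]].
  - exists []. split; [constructor|]. split; [tauto|simpl; lia].
  - destruct (classic (In a l')).
    + exists l'. split; auto. split; [|simpl; lia]. intros x. simpl. rewrite H2. split; [intros [<-|]|]; auto.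
    + exists (a :: l'). split; [constructor; auto|]. split; [|simpl; lia]. intros x. simpl. rewrite H2. tauto.
Qed.

Lemma card_lt_of_list {T} (S : T -> Prop) (c : cardp) (ls : list T) :
  (forall x, S x <-> In x ls) -> (match c with Fin n => length ls < n | Omega => True end) -> card_lt S c.
Proof.
  intros HS Hc. destruct (dedup ls) as [l' [H1 [H2 H3]]]. exists l'. split; auto. split.
  - intros x. rewrite HS. apply H2.
  - destruct c; auto. lia.
Qed.

Lemma card_Sset {T} (c : cardp) (e : nat -> T) N L :
  cardok c (cnt N L) = true -> card_lt (Sset e N L) c.
Proof.
  intros Hc. apply (card_lt_of_list _ _ (map e (filter (fun l => Nat.testbit L l) (seq 0 N)))).
  - intros x. unfold Sset. rewrite in_map_iff. split.
    + intros [l [Hl [Hb <-]]]. exists l. split; auto. apply filter_In. split; auto. apply in_seq. lia.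
    + intros [l [<- Hin]]. apply filter_In in Hin. destruct Hin as [Hin Hb]. apply in_seq in Hin.
      exists l. split; [lia|]. auto.
  - rewrite length_map, <- cnt_filter. destruct c; simpl in *; auto. apply Nat.ltb_lt; auto.
Qed.

Lemma exists_mask N : forall (P : nat -> bool), exists L, L < 2 ^ N /\ forall l, l < N -> Nat.testbit L l = P l.
Proof.
  induction N; intros P.
  - exists 0. split; simpl; [lia|]. intros; lia.
  - destruct (IHN (fun l => P (S l))) as [L [HL Hb]].
    exists (2 * L + Nat.b2n (P 0)). split.
    + simpl. destruct (P 0); simpl; lia.
    + intros [|l] Hl. apply Nat.testbit_0_r. rewrite Nat.testbit_succ_r. apply Hb. lia.
Qed.

Lemma testbit_high L N : L < 2 ^ N -> Nat.testbit L N = false.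
Proof. intros H. apply (Nat.testbit_unique L N false L 0); simpl; lia. Qed.

Lemma is_glb_ext {T} (le : T -> T -> Prop) (S S' : T -> Prop) m :
  (forall y, S y <-> S' y) -> is_glb le S m -> is_glb le S' m.
Proof. intros H [H1 H2]. split; intros; [apply H1, H; auto|apply H2; intros; apply H0, H; auto]. Qed.
Lemma is_lub_ext {T} (le : T -> T -> Prop) (S S' : T -> Prop) m :
  (forall y, S y <-> S' y) -> is_lub le S m -> is_lub le S' m.
Proof. intros H [H1 H2]. split; intros; [apply H1, H; auto|apply H2; intros; apply H0, H; auto]. Qed.

Lemma SC_ext al be {T} (le : T -> T -> Prop) e e' N bt bt' :
  2 <= N -> (forall l, l < N -> e l = e' l) -> (forall l, l < N -> bt l = bt' l) ->
  SC al be le e N bt -> SC al be le e' N bt'.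
Proof.
  intros H2 He Hb [H0 [H1 [HM [HG HJ]]]].
  assert (HS : forall L y, Sset e' N L y <-> Sset e N L y).
  { intros L y. unfold Sset. split; intros [l [Hl [Hl' Hy]]]; exists l; split; auto; split; auto.
    - rewrite He; auto.
    - rewrite <- He; auto. }
  split; [rewrite <- Hb by lia; auto|]. split; [rewrite <- Hb by lia; auto|]. split; [|split].
  - intros k l Hk Hl Hbk Hbl. rewrite <- !He by auto. apply HM; auto; rewrite Hb; auto.
  - intros k L Hk HL Hc Hs Hbk Hg. apply (HG k L Hk HL Hc).
    + intros l Hl Ht. rewrite Hb; auto.
    + rewrite Hb; auto.
    + rewrite He by auto. apply (is_glb_ext _ _ _ _ (HS L)); auto.
  - intros k L Hk HL Hc Hs Hbk Hg. apply (HJ k L Hk HL Hc).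
    + intros l Hl Ht. rewrite Hb; auto.
    + rewrite Hb; auto.
    + rewrite He by auto. apply (is_lub_ext _ _ _ _ (HS L)); auto.
Qed.

Lemma SC_down al be {T} (le : T -> T -> Prop) e N bt :
  SC al be le e (S N) bt -> SC al be le e N bt.
Proof.
  intros [H0 [H1 [HM [HG HJ]]]].
  assert (HS : forall L y, L < 2 ^ N -> (Sset e (S N) L y <-> Sset e N L y)).
  { intros L y HL. unfold Sset. split; intros [l [Hl [Hl' Hy]]]; exists l; split; auto; try lia.
    destruct (Nat.eq_dec l N); [subst; rewrite testbit_high in Hl' by auto; discriminate|lia]. }
  assert (HC : forall L, L < 2 ^ N -> cnt (S N) L = cnt N L).
  { intros L HL. simpl. rewrite testbit_high by auto. simpl. lia. }
  split; auto. split; auto. split; [|split].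
  - intros k l Hk Hl. apply HM; lia.
  - intros k L Hk HL Hc Hs Hbk Hg. apply (HG k L); auto.
    + simpl. lia.
    + rewrite HC; auto.
    + intros l Hl Ht. destruct (Nat.eq_dec l N); [subst; rewrite testbit_high in Ht by auto; discriminate|]. apply Hs; auto. lia.
    + apply (is_glb_ext _ (Sset e N L)); auto. intros y; rewrite HS; tauto.
  - intros k L Hk HL Hc Hs Hbk Hg. apply (HJ k L); auto.
    + simpl. lia.
    + rewrite HC; auto.
    + intros l Hl Ht. destruct (Nat.eq_dec l N); [subst; rewrite testbit_high in Ht by auto; discriminate|]. apply Hs; auto. lia.
    + apply (is_lub_ext _ (Sset e N L)); auto. intros y; rewrite HS; tauto.
Qed.

Lemma SC_le al be {T} (le : T -> T -> Prop) e M M' bt :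
  M <= M' -> SC al be le e M' bt -> SC al be le e M bt.
Proof. intros H. induction H; auto. intros Hs. apply IHle. apply SC_down. auto. Qed.


Definition Filt (al be : cardp) {T} (le : T -> T -> Prop) (F : T -> Prop) : Prop :=
  (forall x y, F x -> le x y -> F y) /\
  (forall (S : T -> Prop) m, card_lt S al -> is_glb le S m -> (forall s, S s -> F s) -> F m) /\
  (forall (S : T -> Prop) m, card_lt S be -> is_lub le S m -> F m -> exists s, S s /\ F s).

Lemma repr_of_filters al be {T} (le : T -> T -> Prop) :
  (forall p q, ~ le p q -> exists F, Filt al be le F /\ F p /\ ~ F q) -> representable al be le.
Proof.
  intros Hsep. exists {F : T -> Prop | Filt al be le F}. exists (fun p F => proj1_sig F p).
  split; [|split].
  - intros p q. split.
    + intros H [F HF]. simpl. intros Hp. destruct HF as [Hup _]. eapply Hup; eauto.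
    + intros H. destruct (classic (le p q)) as [|Hn]; auto.
      destruct (Hsep p q Hn) as [F [HF [Hp Hq]]]. exfalso. apply Hq. apply (H (exist _ F HF)). exact Hp.
  - intros S m HS Hg [F HF]. simpl. destruct HF as [Hup [Hm Hj]]. split.
    + intros Hmx s Hs. eapply Hup; eauto. apply Hg; auto.
    + intros H. eapply Hm; eauto.
  - intros S m HS Hl [F HF]. simpl. destruct HF as [Hup [Hm Hj]]. split.
    + intros Hmx. eapply Hj; eauto.
    + intros [s [Hs Hsx]]. eapply Hup; eauto. apply Hl; auto.
Qed.


Lemma models_of_repr al be {T} (le : T -> T -> Prop) :
  representable al be le -> forall n, sat le [] (chi al be n).
Proof.
  intros [X [h [Hord [Hmeet Hjoin]]]] n. unfold chi. rewrite sat_alls.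
  intros env Hlen. rewrite app_nil_r. destruct env as [|d envt]; [discriminate|].
  set (env := d :: envt) in *. rewrite (sat_Body al be le env d) by lia.
  set (e := fun l => nth l env d). intros Hn.
  assert (Hx : exists x, h (e 0) x /\ ~ h (e 1) x).
  { apply NNPP. intros Hc. apply Hn. apply Hord. intros x Hx. apply NNPP. intros Hx'. apply Hc. eauto. }
  destruct Hx as [x [Hx0 Hx1]].
  set (bt := fun l => if excluded_middle_informative (h (e l) x) then true else false).
  assert (Hbt : forall l, bt l = true <-> h (e l) x).
  { intros l. unfold bt. destruct (excluded_middle_informative _); split; auto; discriminate. }
  assert (Hbf : forall l, bt l = false <-> ~ h (e l) x).
  { intros l. unfold bt. destruct (excluded_middle_informative _); split; auto; try discriminate; tauto. }
  destruct (exists_mask (S (S n)) bt) as [a [Ha Hab]].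
  exists a. split; auto.
  apply (SC_ext al be le e e (S (S n)) bt); auto; [lia| intros l Hl; symmetry; auto |].
  split; [apply Hbt; auto|]. split; [apply Hbf; auto|]. split; [|split].
  - intros k l Hk Hl Hk1 Hl0 Hle. apply Hbf in Hl0. apply Hl0. apply Hbt in Hk1.
    apply (proj1 (Hord (e k) (e l)) Hle x Hk1).
  - intros k L Hk HL Hc Hs Hk0 Hg. apply Hbf in Hk0. apply Hk0.
    apply (proj2 (Hmeet _ _ (card_Sset al e _ L Hc) Hg x)).
    intros s [l [Hl [Hb <-]]]. apply Hbt. auto.
  - intros k L Hk HL Hc Hs Hk1 Hg. apply Hbt in Hk1.
    destruct (proj1 (Hjoin _ _ (card_Sset be e _ L Hc) Hg x) Hk1) as [s [[l [Hl [Hb <-]]] Hsx]].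
    specialize (Hs l Hl Hb). apply Hbf in Hs. auto.
Qed.

Definition kgood (Q : nat -> (nat -> bool) -> Prop) n (s : nat -> bool) : Prop :=
  forall M, exists bt, Q M bt /\ forall i, i < n -> bt i = s i.
Definition kupd (s : nat -> bool) n b : nat -> bool := fun i => if Nat.eqb i n then b else s i.
Fixpoint ksq (Q : nat -> (nat -> bool) -> Prop) n : nat -> bool :=
  match n with
  | 0 => fun _ => false
  | S n => kupd (ksq Q n) n (if excluded_middle_informative (kgood Q (S n) (kupd (ksq Q n) n true)) then true else false)
  end.

Lemma konig (Q : nat -> (nat -> bool) -> Prop) :
  (forall M bt bt', (forall l, l < S (S M) -> bt l = bt' l) -> Q M bt -> Q M bt') ->
  (forall M M' bt, M <= M' -> Q M' bt -> Q M bt) ->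
  (forall M, exists bt, Q M bt) -> exists bt, forall M, Q M bt.
Proof.
  intros Hext Hdown Hex.
  assert (Hstep : forall n s, kgood Q n s -> kgood Q (S n) (kupd s n true) \/ kgood Q (S n) (kupd s n false)).
  { intros n s Hg. destruct (classic (kgood Q (S n) (kupd s n true))) as [|H1]; auto.
    destruct (classic (kgood Q (S n) (kupd s n false))) as [|H0]; auto. exfalso.
    apply not_all_ex_not in H1. destruct H1 as [M1 H1].
    apply not_all_ex_not in H0. destruct H0 as [M0 H0].
    destruct (Hg (Nat.max M0 M1)) as [bt [HQ Hagree]].
    assert (Hag : forall i, i < S n -> bt i = kupd s n (bt n) i).
    { intros i Hi. unfold kupd. destruct (Nat.eqb_spec i n); subst; auto. apply Hagree. lia. }
    destruct (bt n) eqn:Eb.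
    - apply H1. exists bt. split; auto. eapply Hdown; [|exact HQ]. lia.
    - apply H0. exists bt. split; auto. eapply Hdown; [|exact HQ]. lia. }
  assert (Hgood : forall n, kgood Q n (ksq Q n)).
  { induction n.
    - intros M. destruct (Hex M) as [bt Hbt]. exists bt. split; auto. intros; lia.
    - simpl. destruct (excluded_middle_informative _) as [H|H]; auto.
      destruct (Hstep _ _ IHn); tauto. }
  assert (Hstab : forall m i, i < m -> ksq Q m i = ksq Q (S i) i).
  { induction m; intros i Hi; [lia|]. destruct (Nat.eq_dec i m); [subst; reflexivity|].
    simpl ksq at 1. unfold kupd at 1. destruct (Nat.eqb_spec i m); [lia|]. apply IHm. lia. }
  exists (fun i => ksq Q (S i) i). intros M. destruct (Hgood (S (S M)) M) as [bt [HQ Hag]].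
  apply (Hext M bt); auto. intros l Hl. rewrite Hag by auto. apply Hstab. auto.
Qed.

Lemma bound_list {T} (pos : T -> nat) (ls : list T) : exists B, forall s, In s ls -> pos s < B.
Proof.
  induction ls as [|a ls [B HB]]. exists 0; simpl; tauto.
  exists (S (Nat.max (pos a) B)). intros s [<-|Hs]. lia. specialize (HB s Hs). lia.
Qed.

Lemma pos_mask {T} (e : nat -> T) (pos : T -> nat) (ls : list T) (N : nat) :
  (forall x, e (pos x) = x) -> NoDup ls -> (forall s, In s ls -> pos s < N) ->
  exists L, L < 2 ^ N /\ cnt N L = length ls /\
    (forall l, l < N -> Nat.testbit L l = true -> exists s, In s ls /\ pos s = l) /\
    (forall y, Sset e N L y <-> In y ls).
Proof.
  intros Hep Hnd HN.
  set (P := fun l => existsb (fun s => Nat.eqb (pos s) l) ls).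
  assert (HP : forall l, P l = true <-> exists s, In s ls /\ pos s = l).
  { intros l. unfold P. rewrite existsb_exists. split; intros [s [H1 H2]]; exists s; split; auto; apply Nat.eqb_eq; auto. }
  destruct (exists_mask N P) as [L [HL Hb]].
  exists L. split; auto. split; [|split].
  - rewrite cnt_filter.
    rewrite (filter_ext_in _ P) by (intros l Hl; apply in_seq in Hl; apply Hb; lia).
    rewrite <- (length_map pos ls). apply Permutation_length.
    apply NoDup_Permutation.
    + apply NoDup_filter, seq_NoDup.
    + apply FinFun.Injective_map_NoDup; auto. intros x y Hxy. rewrite <- (Hep x), <- (Hep y), Hxy. auto.
    + intros l. rewrite filter_In, in_seq, HP, in_map_iff. split.
      * intros [_ [s [H1 H2]]]. eauto.
      * intros [s [H1 H2]]. subst. split; [specialize (HN s H2); lia|]. eauto.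
  - intros l Hl Ht. apply HP. rewrite <- Hb; auto.
  - intros y. unfold Sset. split.
    + intros [l [Hl [Ht <-]]]. rewrite Hb in Ht by auto. apply HP in Ht. destruct Ht as [s [Hs <-]]. rewrite Hep. auto.
    + intros Hy. exists (pos y). split; [apply HN; auto|]. split; [|apply Hep].
      rewrite Hb by (apply HN; auto). apply HP. eauto.
Qed.

Lemma filters_of_models al be {T} (le : T -> T -> Prop) :
  is_poset le -> countable T -> (forall n, sat le [] (chi al be n)) ->
  forall p q, ~ le p q -> exists F, Filt al be le F /\ F p /\ ~ F q.
Proof.
  intros [Hrefl _] [f Hf] Hall p q Hpq.
  set (e := fun k => match k with 0 => p | 1 => q | S (S k) => epsilon (inhabits p) (fun x => f x = k) end).
  set (pos := fun x => S (S (f x))).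
  assert (Hep : forall x, e (pos x) = x).
  { intros x. simpl. apply Hf. apply (epsilon_spec (inhabits p) (fun y => f y = f x)). eauto. }
  assert (HSC : forall M, exists bt, SC al be le e (S (S M)) bt).
  { intros M. pose proof (Hall M) as H. rewrite (sat_chi al be le M p) in H.
    set (env := map e (seq 0 (S (S M)))).
    assert (Hnth : forall l, l < S (S M) -> nth l env p = e l).
    { intros l Hl. unfold env. rewrite (nth_indep _ p (e 0)) by (rewrite length_map, length_seq; auto).
      rewrite map_nth, seq_nth by auto. reflexivity. }
    destruct (H env) as [a [Ha Hs]].
    - unfold env. rewrite length_map, length_seq. reflexivity.
    - rewrite !Hnth by lia. exact Hpq.
    - exists (Nat.testbit a). eapply SC_ext; [| |intros; reflexivity|exact Hs]; auto. lia. }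
  destruct (konig (fun M bt => SC al be le e (S (S M)) bt)) as [bs Hbs].
  - intros M bt bt' Hag Hs. eapply SC_ext; [| |intros; apply Hag; auto|exact Hs]; auto. lia.
  - intros M M' bt HM Hs. eapply SC_le; [|exact Hs]. lia.
  - exact HSC.
  - assert (HS : forall N, SC al be le e N bs).
    { intros N. eapply SC_le; [|apply (Hbs N)]. lia. }
    assert (Hmono : forall k l, bs k = true -> le (e k) (e l) -> bs l = true).
    { intros k l Hk Hle. destruct (bs l) eqn:El; auto. exfalso.
      destruct (HS (S (Nat.max k l))) as [_ [_ [HM _]]]. apply (HM k l); auto; lia. }
    set (F := fun x => exists k, e k = x /\ bs k = true).
    assert (Fpos : forall x, F x <-> bs (pos x) = true).
    { intros x. split.
      - intros [k [<- Hk]]. apply (Hmono k); auto. rewrite Hep. apply Hrefl.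
      - intros H. exists (pos x). auto. }
    assert (H0 : bs 0 = true) by (destruct (HS 0); auto).
    assert (H1 : bs 1 = false) by (destruct (HS 0) as [_ [? _]]; auto).
    exists F. split; [|split].
    + split; [|split].
      * intros x y Hx Hxy. apply Fpos. apply Fpos in Hx. apply (Hmono (pos x)); auto. rewrite !Hep. auto.
      * intros Ss m [ls [Hnd [HSl Hlen]]] Hg Hall'. apply Fpos. destruct (bs (pos m)) eqn:Em; auto. exfalso.
        destruct (bound_list pos ls) as [B HB].
        set (N := S (Nat.max (pos m) B)).
        destruct (pos_mask e pos ls N Hep Hnd) as [L [HL [Hcnt [Hbits HSs]]]].
        { intros s Hs. specialize (HB s Hs). unfold N. lia. }
        destruct (HS N) as [_ [_ [_ [HG _]]]].
        apply (HG (pos m) L); auto.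
        -- unfold N. lia.
        -- rewrite Hcnt. destruct al; auto. apply Nat.ltb_lt. auto.
        -- intros l Hl Ht. destruct (Hbits l Hl Ht) as [s [Hs <-]]. apply Fpos. apply Hall'. apply HSl. auto.
        -- rewrite Hep. apply (is_glb_ext _ Ss); auto. intros y. rewrite HSs. auto.
      * intros Ss m [ls [Hnd [HSl Hlen]]] Hlub Hm. apply NNPP. intros Hno.
        apply Fpos in Hm.
        destruct (bound_list pos ls) as [B HB].
        set (N := S (Nat.max (pos m) B)).
        destruct (pos_mask e pos ls N Hep Hnd) as [L [HL [Hcnt [Hbits HSs]]]].
        { intros s Hs. specialize (HB s Hs). unfold N. lia. }
        destruct (HS N) as [_ [_ [_ [_ HJ]]]].
        apply (HJ (pos m) L); auto.
        -- unfold N. lia.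
        -- rewrite Hcnt. destruct be; auto. apply Nat.ltb_lt. auto.
        -- intros l Hl Ht. destruct (Hbits l Hl Ht) as [s [Hs <-]].
           destruct (bs (pos s)) eqn:Es; auto. exfalso. apply Hno. exists s. split.
           apply HSl; auto. apply Fpos; auto.
        -- rewrite Hep. apply (is_lub_ext _ Ss); [intros y; rewrite HSs; apply HSl | exact Hlub].
    + exists 0. auto.
    + intros Hq. apply Fpos in Hq. assert (bs 1 = true).
      { apply (Hmono (pos q)); auto. rewrite Hep. apply Hrefl. }
      congruence.
Qed.

Theorem main al be : exists Theta : formula -> Prop,
    (forall f, Theta f -> sentence f) /\
    recursive_formula_set Theta /\
    (forall (T : Type) (le : T -> T -> Prop),
        is_poset le -> countable T ->
        (models le Theta <-> representable al be le)).
Proof.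
  exists (fun f => exists n, f = chi al be n). split; [|split].
  - intros f [n ->]. apply chi_sentence.
  - apply chi_recursive.
  - intros T le Hpo Hc. split.
    + intros Hm. apply repr_of_filters. apply filters_of_models; auto.
      intros n. apply Hm. eauto.
    + intros Hr f [n ->]. apply models_of_repr. auto.
Qed.


Theorem proposition6p4 (alpha beta : cardp) (ha : ge2 alpha) (hb : ge2 beta) :
  exists Theta : formula -> Prop,
    (forall f, Theta f -> sentence f) /\
    recursive_formula_set Theta /\
    (forall (T : Type) (le : T -> T -> Prop),
        is_poset le -> countable T ->
        (models le Theta <-> representable alpha beta le)).
Proof. apply main. Qed.
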